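(* Let $\{\alpha_t\}_{t\in\mathbb Z_{\ge0}}$ be a sequence of continuous, weakly monotonically increasing functions $\alpha_t\colon\mathbb R_{\ge0}\to\mathbb R_{\ge0}$ with $\alpha_t^{-1}(0)=\{0\}$ for all $t$. Then there is a non-negative $\alpha\in C^\infty(\mathbb R)$ with $\alpha^{-1}(0)=\mathbb R_{\le0}$ such that for all $t,k\in\mathbb Z_{\ge0}$, $\lim_{x\to0,\,x>0}\frac{\alpha(x)}{(\alpha_t(x))^k}=0$. *)

(* Defs.v *)
From Stdlib Require Import Reals.
From Coquelicot Require Export Coquelicot.
Export Reals.
Open Scope R_scope.

Definition smooth (f : R -> R) : Prop :=
  forall (n : nat) (x : R), ex_derive_n f n x.

Definition continuous_on_nonneg (g : R -> R) : Prop :=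
  forall x : R, 0 <= x ->
    filterlim g (within (fun y => 0 <= y) (locally x)) (locally (g x)).

(* Main.v *)
Require Import Defs.
From Stdlib Require Import Reals Lra Lia.
From Coquelicot Require Import Coquelicot.
Open Scope R_scope.

Lemma dR_const c y : is_derive (fun _ => c) y 0.
Proof. exact (@is_derive_const R_AbsRing _ c y). Qed.
Lemma dR_id y : is_derive (fun y => y) y 1.
Proof. exact (@is_derive_id R_AbsRing y). Qed.
Lemma dR_plus (f g : R -> R) x df dg : is_derive f x df -> is_derive g x dg ->
  is_derive (fun t => f t + g t) x (df + dg).
Proof. intros A B. exact (@is_derive_plus R_AbsRing _ f g x df dg A B). Qed.
Lemma dR_mult (f g : R -> R) x df dg : is_derive f x df -> is_derive g x dg ->
  is_derive (fun t => f t * g t) x (df * g x + f x * dg).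
Proof. intros A B. exact (@is_derive_mult R_AbsRing f g x df dg A B Rmult_comm). Qed.
Lemma dR_comp (f g : R -> R) x df dg : is_derive f (g x) df -> is_derive g x dg ->
  is_derive (fun t => f (g t)) x (dg * df).
Proof. intros A B. exact (@is_derive_comp R_AbsRing _ f g x df dg A B). Qed.

Inductive ispoly : (R -> R) -> Prop :=
 | P_const (c : R) : ispoly (fun _ => c)
 | P_id : ispoly (fun y => y)
 | P_add p q : ispoly p -> ispoly q -> ispoly (fun y => p y + q y)
 | P_mul p q : ispoly p -> ispoly q -> ispoly (fun y => p y * q y).

Lemma poly_deriv p : ispoly p -> exists p', ispoly p' /\ forall y, is_derive p y (p' y).
Proof.
induction 1 as [c| |p q _ [p' [Hp' Dp]] _ [q' [Hq' Dq]]|p q Hp [p' [Hp' Dp]] Hq [q' [Hq' Dq]]].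
- exists (fun _ => 0); split; [constructor|]. intros; apply dR_const.
- exists (fun _ => 1); split; [constructor|]. intros; apply dR_id.
- exists (fun y => p' y + q' y); split; [now constructor|]. intros; now apply dR_plus.
- exists (fun y => p' y * q y + p y * q' y); split.
  + apply P_add; now apply P_mul.
  + intros y. now apply dR_mult.
Qed.

Lemma poly_bound p : ispoly p -> exists C N, 0 <= C /\ forall y, 0 <= y -> Rabs (p y) <= C * (1 + y) ^ N.
Proof.
induction 1 as [c| |p q _ [C1 [N1 [HC1 B1]]] _ [C2 [N2 [HC2 B2]]]|p q _ [C1 [N1 [HC1 B1]]] _ [C2 [N2 [HC2 B2]]]].
- exists (Rabs c), 0%nat; split; [apply Rabs_pos|]. intros; simpl; lra.
- exists 1, 1%nat; split; [lra|]. intros; simpl. rewrite Rabs_pos_eq; lra.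
- exists (C1 + C2), (N1 + N2)%nat; split; [lra|]. intros y Hy.
  assert (E1 : (1 + y) ^ N1 <= (1 + y) ^ (N1 + N2)) by (apply Rle_pow; [lra|lia]).
  assert (E2 : (1 + y) ^ N2 <= (1 + y) ^ (N1 + N2)) by (apply Rle_pow; [lra|lia]).
  specialize (B1 y Hy); specialize (B2 y Hy).
  eapply Rle_trans; [apply Rabs_triang|].
  assert (C1 * (1+y)^N1 <= C1 * (1+y)^(N1+N2)) by (apply Rmult_le_compat_l; lra).
  assert (C2 * (1+y)^N2 <= C2 * (1+y)^(N1+N2)) by (apply Rmult_le_compat_l; lra).
  nra.
- exists (C1 * C2), (N1 + N2)%nat; split; [nra|]. intros y Hy.
  specialize (B1 y Hy); specialize (B2 y Hy). rewrite Rabs_mult, pow_add.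
  replace (C1 * C2 * ((1 + y) ^ N1 * (1 + y) ^ N2)) with ((C1 * (1+y)^N1) * (C2 * (1+y)^N2)) by ring.
  apply Rmult_le_compat; auto; apply Rabs_pos.
Qed.

Lemma exp_pow_gen (n : nat) a : exp a ^ n = exp (INR n * a).
Proof. induction n as [|n IH]; simpl. rewrite Rmult_0_l, exp_0; reflexivity.
  rewrite IH, <- exp_plus. f_equal. destruct n; simpl; ring. Qed.

Lemma exp_pow_le (M : nat) z : 0 <= z -> z ^ M <= (INR M + 1) ^ M * exp z.
Proof.
intros Hz. set (m := INR M + 1).
assert (Hm : 1 <= m) by (unfold m; pose proof (pos_INR M); lra).
assert (H1 : z / m <= exp (z / m)) by (pose proof (exp_ineq1_le (z/m)); lra).
assert (H0 : 0 <= z / m) by (apply Rmult_le_pos; [lra| apply Rlt_le, Rinv_0_lt_compat; lra]).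
assert (H2 : (z / m) ^ M <= exp (z / m) ^ M) by (apply pow_incr; lra).
assert (H3 : exp (z / m) ^ M = exp (INR M * (z / m))).
{ apply exp_pow_gen. }
assert (H4 : exp (INR M * (z / m)) <= exp z).
{ assert (INR M * (z / m) <= z).
  { unfold m. pose proof (pos_INR M).
    replace (INR M * (z / (INR M + 1))) with (z * (INR M / (INR M + 1))) by (field; lra).
    assert (INR M / (INR M + 1) <= 1) by (apply Rmult_le_reg_r with (INR M + 1); [lra|]; unfold Rdiv; rewrite Rmult_assoc, Rinv_l; lra).
    nra. }
  destruct (Rle_lt_or_eq_dec _ _ H) as [Hl|He]. apply Rlt_le, exp_increasing, Hl. rewrite He; lra. }
assert (H5 : (z / m) ^ M = z ^ M / m ^ M) by (unfold Rdiv; rewrite Rpow_mult_distr, pow_inv; reflexivity).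
assert (Hmp : 0 < m ^ M) by (apply pow_lt; lra).
assert (z ^ M / m ^ M <= exp z) by lra.
apply Rmult_le_reg_r with (/ m ^ M). apply Rinv_0_lt_compat; lra.
replace (m ^ M * exp z * / m ^ M) with (exp z) by (field; lra). exact H.
Qed.

Lemma dR_opp (f : R -> R) x df : is_derive f x df -> is_derive (fun t => - f t) x (- df).
Proof. intros A. exact (@is_derive_opp R_AbsRing _ f x df A). Qed.
Lemma is_derive_eq (f : R -> R) x l l' : is_derive f x l -> l = l' -> is_derive f x l'.
Proof. intros H ->; exact H. Qed.

Lemma flat p : ispoly p -> exists K, 0 <= K /\ forall x, 0 < x ->
  Rabs (p (/ x) * exp (- / x)) <= K /\ Rabs (p (/ x) * exp (- / x)) <= K * (x * x).
Proof.
intros Hp. destruct (poly_bound p Hp) as [C [N [HC B]]].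
set (L := (INR (N + 2) + 1) ^ (N + 2)).
assert (HL : 0 < L) by (unfold L; apply pow_lt; pose proof (pos_INR (N+2)); lra).
exists (C * L * exp 1). split. { pose proof (exp_pos 1). apply Rmult_le_pos; [|lra]. apply Rmult_le_pos; lra. }
intros x Hx. set (y := / x).
assert (Hy : 0 < y) by (apply Rinv_0_lt_compat; lra).
assert (Hxy : x = / y) by (unfold y; rewrite Rinv_inv; reflexivity).
assert (E : (1 + y) ^ (N + 2) * exp (- y) <= L * exp 1).
{ pose proof (exp_pow_le (N + 2) (1 + y) ltac:(lra)) as H. fold L in H.
  rewrite exp_plus in H. rewrite exp_Ropp.
  pose proof (exp_pos y).
  apply Rmult_le_reg_r with (exp y); [lra|]. rewrite Rmult_assoc, Rinv_l; lra. }
specialize (B y (Rlt_le _ _ Hy)).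
assert (M : Rabs (p y * exp (- y)) * (1 + y) ^ 2 <= C * L * exp 1).
{ rewrite Rabs_mult, (Rabs_pos_eq (exp _)) by (apply Rlt_le, exp_pos).
  rewrite pow_add in E.
  pose proof (exp_pos (- y)).
  assert (0 <= (1 + y) ^ N) by (apply pow_le; lra).
  assert (0 <= (1 + y) ^ 2) by (apply pow_le; lra).
  apply Rle_trans with (C * (1 + y) ^ N * exp (- y) * (1 + y) ^ 2).
  - apply Rmult_le_compat_r; [lra|]. apply Rmult_le_compat_r; lra.
  - replace (C * (1 + y) ^ N * exp (- y) * (1 + y) ^ 2) with (C * ((1 + y) ^ N * (1 + y) ^ 2 * exp (- y))) by ring.
    replace (C*L*exp 1) with (C*(L*exp 1)) by ring. apply Rmult_le_compat_l; lra. }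
assert (P1 : 1 <= (1 + y) ^ 2) by nra.
assert (P2 : / (x * x) <= (1 + y) ^ 2).
{ rewrite Hxy, Rinv_mult, !Rinv_inv. simpl; nra. }
pose proof (Rabs_pos (p y * exp (- y))).
split.
- nra.
- assert (0 < x * x) by nra.
  apply Rle_trans with (Rabs (p y * exp (- y)) * (1 + y) ^ 2 * (x * x)).
  + rewrite Rmult_assoc. rewrite <- (Rmult_1_r (Rabs _)) at 1. apply Rmult_le_compat_l; [lra|].
    apply Rmult_le_reg_l with (/ (x * x)). apply Rinv_0_lt_compat; lra.
    replace (/ (x * x) * ((1 + y) ^ 2 * (x * x))) with ((1 + y) ^ 2) by (field; lra). lra.
  + apply Rmult_le_compat_r; lra.
Qed.

Definition G (p : R -> R) (x : R) : R :=
  if Rle_dec x 0 then 0 else p (/ x) * exp (- / x).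

Lemma G_bound p : ispoly p -> exists K, forall x, Rabs (G p x) <= K /\ Rabs (G p x) <= K * (x * x).
Proof.
intros Hp; destruct (flat p Hp) as [K [HK F]]. exists K. intros x. unfold G.
destruct (Rle_dec x 0). rewrite Rabs_R0. split; [lra|]. apply Rmult_le_pos; nra.
apply F; lra.
Qed.

Lemma G_deriv p : ispoly p -> exists q, ispoly q /\ forall x, is_derive (G p) x (G q x).
Proof.
intros Hp. destruct (poly_deriv p Hp) as [p' [Hp' Dp]].
exists (fun y => y * y * (p y + (-1) * p' y)). split.
{ exact (P_mul _ _ (P_mul _ _ P_id P_id) (P_add _ _ Hp (P_mul _ _ (P_const (-1)) Hp'))). }
intros x. destruct (Rtotal_order x 0) as [Hx|[Hx|Hx]].
- apply is_derive_ext_loc with (f := fun _ => 0).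
  + assert (Hpos : 0 < - x) by lra. exists (mkposreal _ Hpos). intros t Ht.
    change (Rabs (t - x) < - x) in Ht. unfold G. destruct (Rle_dec t 0); [reflexivity|].
    apply Rabs_def2 in Ht. lra.
  + unfold G. destruct (Rle_dec x 0); [|lra]. apply dR_const.
- subst x. unfold G at 2. destruct (Rle_dec 0 0); [|lra].
  apply is_derive_Reals. destruct (G_bound p Hp) as [K HK].
  assert (HK0 : 0 <= K) by (destruct (HK 0) as [A _]; pose proof (Rabs_pos (G p 0)); lra).
  intros eps Heps. assert (Hd : 0 < eps / (K + 1)) by (apply Rdiv_lt_0_compat; lra).
  exists (mkposreal _ Hd). intros h Hh Hhd. simpl in Hhd.
  assert (G p 0 = 0) by (unfold G; destruct (Rle_dec 0 0); [reflexivity|lra]).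
  rewrite Rplus_0_l, H, Rminus_0_r, Rminus_0_r.
  destruct (HK h) as [_ B].
  unfold Rdiv. rewrite Rabs_mult, Rabs_inv.
  assert (0 < Rabs h) by (apply Rabs_pos_lt; exact Hh).
  apply Rle_lt_trans with (K * Rabs h).
  + apply Rmult_le_reg_r with (Rabs h); [lra|]. rewrite Rmult_assoc, Rinv_l by lra.
    rewrite Rmult_1_r. replace (K * Rabs h * Rabs h) with (K * (h*h)). exact B.
    rewrite Rmult_assoc, <- Rabs_mult, (Rabs_pos_eq (h*h)); [ring|nra].
  + apply Rle_lt_trans with (K * (eps / (K + 1))). apply Rmult_le_compat_l; lra.
    apply Rmult_lt_reg_r with (K + 1); [lra|]. unfold Rdiv. 
    replace (K * (eps * / (K + 1)) * (K + 1)) with (K * eps) by (field; lra). nra.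
- apply is_derive_ext_loc with (f := fun t => p (/ t) * exp (- / t)).
  + exists (mkposreal _ Hx). intros t Ht.
    change (Rabs (t - x) < x) in Ht. unfold G. destruct (Rle_dec t 0); [|reflexivity].
    apply Rabs_def2 in Ht. lra.
  + assert (Di : is_derive (fun t => / t) x (- 1 / x ^ 2)).
    { apply (is_derive_inv (fun t => t) x 1). apply dR_id. lra. }
    eapply is_derive_eq.
    * apply dR_mult. apply (dR_comp p (fun t => / t)). apply Dp. exact Di.
      apply (dR_comp exp (fun t => - / t)). apply is_derive_exp. apply dR_opp. exact Di.
    * unfold G. destruct (Rle_dec x 0); [lra|]. unfold scal, mult; simpl; unfold mult; simpl. field. lra.
Qed.

Definition psi := G (fun _ => 1).

Lemma psi_derivs j : exists p, ispoly p /\ forall x, Derive_n psi j x = G p x.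
Proof.
induction j as [|j [p [Hp E]]].
- exists (fun _ => 1). split; [constructor|]. reflexivity.
- destruct (G_deriv p Hp) as [q [Hq D]]. exists q; split; [exact Hq|].
  intros x. simpl. rewrite (Derive_ext _ _ x E). apply is_derive_unique, D.
Qed.

Lemma psi_D j x : is_derive (Derive_n psi j) x (Derive_n psi (S j) x).
Proof.
destruct (psi_derivs j) as [p [Hp E]]. destruct (G_deriv p Hp) as [q [Hq D]].
simpl. rewrite (Derive_ext _ _ x E), (is_derive_unique _ _ _ (D x)).
apply is_derive_ext with (G p). intros; symmetry; apply E. apply D.
Qed.

Lemma psi_bnd j : exists K, 0 <= K /\ forall x, Rabs (Derive_n psi j x) <= K.
Proof.
destruct (psi_derivs j) as [p [Hp E]]. destruct (G_bound p Hp) as [K HK].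
exists K. split. destruct (HK 0) as [A _]. pose proof (Rabs_pos (G p 0)); lra.
intros x; rewrite E; apply HK.
Qed.

Lemma geom_half : Rabs (1/2) < 1.
Proof. rewrite Rabs_pos_eq; lra. Qed.

Lemma ex_dom (a : nat -> R) K : (forall n, Rabs (a n) <= K * (1/2)^n) ->
  ex_series (fun n => Rabs (a n)) /\ ex_series a.
Proof.
intros H.
assert (Hb : ex_series (fun n => K * (1/2)^n)).
{ apply (ex_series_scal_l K (fun n => (1/2)^n)). apply ex_series_geom, geom_half. }
assert (A : ex_series (fun n => Rabs (a n))).
{ apply (@ex_series_le R_AbsRing R_CompleteNormedModule (fun n => Rabs (a n)) (fun n => K * (1/2)^n)); [|exact Hb].
  intros n. change (Rabs (Rabs (a n)) <= K * (1/2)^n). rewrite Rabs_Rabsolu. apply H. }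
split; [exact A|]. now apply ex_series_Rabs.
Qed.

Lemma cvu_geom (u : nat -> R -> R) K : 0 <= K -> (forall n y, Rabs (u n y) <= K * (1/2)^n) ->
  forall x d, CVU (fun N y => sum_f_R0 (fun n => u n y) N) (fun y => Series (fun n => u n y)) x d.
Proof.
intros HK H x d eps Heps.
assert (He : 0 < eps / (K + 1)) by (apply Rdiv_lt_0_compat; lra).
destruct (pow_lt_1_zero (1/2) geom_half _ He) as [N HN].
exists N. intros n y Hn _.
destruct (ex_dom (fun k => u k y) K (fun k => H k y)) as [_ Ex].
rewrite (Series_incr_n _ (S n)) by (lia || exact Ex). simpl pred.
replace (sum_f_R0 (fun k => u k y) n + Series (fun k => u (S n + k)%nat y) - sum_f_R0 (fun k => u k y) n)
  with (Series (fun k => u (S n + k)%nat y)) by ring.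
assert (Bt : forall k, Rabs (u (S n + k)%nat y) <= (K * (1/2)^(S n)) * (1/2)^k).
{ intros k. rewrite Rmult_assoc, <- pow_add. apply H. }
destruct (ex_dom _ _ Bt) as [ExA _].
eapply Rle_lt_trans; [apply Series_Rabs, ExA|].
eapply Rle_lt_trans.
{ apply (Series_le _ (fun k => (K * (1/2)^(S n)) * (1/2)^k)).
  - intros k; split; [apply Rabs_pos|apply Bt].
  - apply (ex_series_scal_l _ (fun k => (1/2)^k)). apply ex_series_geom, geom_half. }
rewrite Series_scal_l, Series_geom by apply geom_half.
specialize (HN n Hn). rewrite Rabs_pos_eq in HN by (apply pow_le; lra).
simpl. replace (K * (1 / 2 * (1 / 2) ^ n) * / (1 - 1 / 2)) with (K * (1/2)^n) by field.
apply Rle_lt_trans with (K * (eps / (K + 1))). apply Rmult_le_compat_l; lra.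
apply Rmult_lt_reg_r with (K + 1); [lra|]. unfold Rdiv.
replace (K * (eps * / (K + 1)) * (K + 1)) with (K * eps) by (field; lra). nra.
Qed.

Definition Ser (h : nat -> R -> R) (c a : nat -> R) (j : nat) (x : R) :=
  Series (fun n => c n * h j (x - a n)).

Lemma series_deriv (h : nat -> R -> R) (c a : nat -> R)
  (Hh : forall j x, is_derive (h j) x (h (S j) x))
  (Hb : forall j, exists K, 0 <= K /\ forall y, Rabs (h j y) <= K)
  (Hc : forall n, Rabs (c n) <= (1/2)^n) j x :
  is_derive (Ser h c a j) x (Ser h c a (S j) x).
Proof.
apply is_derive_Reals.
assert (Dom : forall j, exists K, 0 <= K /\ forall n y, Rabs (c n * h j (y - a n)) <= K * (1/2)^n).
{ intros i. destruct (Hb i) as [K [HK B]]. exists K. split; [exact HK|]. intros n y.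
  rewrite Rabs_mult, Rmult_comm. apply Rmult_le_compat; try apply Rabs_pos; auto. }
apply (CVU_derivable (fun N y => sum_f_R0 (fun n => c n * h j (y - a n)) N)
                     (fun N y => sum_f_R0 (fun n => c n * h (S j) (y - a n)) N)
                     (Ser h c a j) (Ser h c a (S j)) x (mkposreal 1 Rlt_0_1)).
- destruct (Dom (S j)) as [K [HK B]]. apply (cvu_geom _ K HK B).
- intros y _. destruct (Dom j) as [K [HK B]]. destruct (ex_dom _ _ (fun n => B n y)) as [_ Ex].
  apply is_series_Reals, Series_correct, Ex.
- intros N y _. apply is_derive_Reals. induction N as [|N IH].
  + simpl. apply is_derive_scal. apply (is_derive_eq _ _ _ _ (dR_comp (h j) (fun t => t - a 0%nat) y _ _ (Hh j _) (dR_plus _ _ _ _ _ (dR_id y) (dR_const (- a 0%nat) y)))). rewrite Rplus_0_r, Rmult_1_l; reflexivity.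
  + simpl. apply dR_plus. exact IH. apply is_derive_scal.
    apply (is_derive_eq _ _ _ _ (dR_comp (h j) (fun t => t - a (S N)) y _ _ (Hh j _) (dR_plus _ _ _ _ _ (dR_id y) (dR_const (- a (S N)) y)))). rewrite Rplus_0_r, Rmult_1_l; reflexivity.
- change (Rabs (x - x) < 1). rewrite Rminus_diag, Rabs_R0; lra.
Qed.

Fixpoint prodf (f : nat -> R) (m : nat) : R :=
  match m with 0%nat => 1 | S m' => prodf f m' * f m' end.

Lemma prodf_bounds f m : (forall t, (t < m)%nat -> 0 < f t <= 1) ->
  0 < prodf f m <= 1 /\ forall t, (t < m)%nat -> prodf f m <= f t.
Proof.
induction m as [|m IH]; intros H.
- simpl; split; [lra|]. intros; lia.
- destruct IH as [[A B] C]. intros t Ht; apply H; lia.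
  destruct (H m (Nat.lt_succ_diag_r m)) as [D E].
  simpl. split. split; nra.
  intros t Ht. destruct (Nat.eq_dec t m) as [->|Hne].
  + nra.
  + assert (prodf f m <= f t) by (apply C; lia). nra.
Qed.

Lemma pow_le1 b n : 0 <= b <= 1 -> 0 <= b ^ n <= 1.
Proof. intros H; induction n; simpl; [lra|]. nra. Qed.

Lemma pow_anti b k n : 0 <= b <= 1 -> (k <= n)%nat -> b ^ n <= b ^ k.
Proof.
intros H Hk. replace n with (k + (n - k))%nat by lia. rewrite pow_add.
pose proof (pow_le1 b k H). pose proof (pow_le1 b (n - k) H). nra.
Qed.

Lemma Series_zero : Series (fun _ => 0) = 0.
Proof.
rewrite (Series_ext _ (fun n => 0 * 1)) by (intros; ring).
rewrite Series_scal_l; ring.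
Qed.

Lemma psi_nonpos y : y <= 0 -> psi y = 0.
Proof. intros H; unfold psi, G; destruct (Rle_dec y 0); [reflexivity|lra]. Qed.

Lemma psi_pos y : 0 < y -> 0 < psi y <= 1.
Proof.
intros H; unfold psi, G; destruct (Rle_dec y 0); [lra|].
rewrite Rmult_1_l. split. apply exp_pos.
rewrite <- exp_0. left. apply exp_increasing.
assert (0 < / y) by (apply Rinv_0_lt_compat; lra). lra.
Qed.

Lemma psi_01 y : 0 <= psi y <= 1.
Proof. destruct (Rle_dec y 0). rewrite psi_nonpos; lra. pose proof (psi_pos y); lra. Qed.

Theorem propositionA1
  (alpha_ : nat -> R -> R)
  (Hcont : forall t : nat, continuous_on_nonneg (alpha_ t))
  (Hmono : forall (t : nat) (x y : R), 0 <= x -> x <= y -> alpha_ t x <= alpha_ t y)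
  (Hnonneg : forall (t : nat) (x : R), 0 <= x -> 0 <= alpha_ t x)
  (Hzero : forall (t : nat) (x : R), 0 <= x -> (alpha_ t x = 0 <-> x = 0)) :
  exists alpha : R -> R,
    smooth alpha /\
    (forall x : R, 0 <= alpha x) /\
    (forall x : R, alpha x = 0 <-> x <= 0) /\
    (forall t k : nat,
       filterlim (fun x => alpha x / (alpha_ t x) ^ k) (at_right 0) (locally 0)).
Proof.
set (a := fun n : nat => / (INR n + 1)).
assert (Ha : forall n, 0 < a n <= 1).
{ intros n. unfold a. pose proof (pos_INR n). split. apply Rinv_0_lt_compat; lra.
  rewrite <- Rinv_1. apply Rinv_le_contravar; lra. }
assert (Hamono : forall n m, (n <= m)%nat -> a m <= a n).
{ intros n m H. unfold a. apply Rinv_le_contravar. pose proof (pos_INR n); lra.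
  apply le_INR in H; lra. }
assert (Hpos : forall t x, 0 < x -> 0 < alpha_ t x).
{ intros t x Hx. destruct (Hnonneg t x (Rlt_le _ _ Hx)) as [H|H]; [exact H|].
  symmetry in H. apply (Hzero t x (Rlt_le _ _ Hx)) in H. lra. }
set (c := fun n : nat => (1/2)^n * a n * prodf (fun t => Rmin 1 (alpha_ t (a n)) ^ n) (S n)).
assert (Hfac : forall n t, 0 < Rmin 1 (alpha_ t (a n)) ^ n <= 1).
{ intros n t. assert (0 < Rmin 1 (alpha_ t (a n)) <= 1).
  { split. apply Rmin_glb_lt; [lra|apply Hpos, Ha]. apply Rmin_l. }
  split. apply pow_lt; lra. apply pow_le1; lra. }
assert (Hprod : forall n, 0 < prodf (fun t => Rmin 1 (alpha_ t (a n)) ^ n) (S n) <= 1 /\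
   forall t, (t < S n)%nat -> prodf (fun t => Rmin 1 (alpha_ t (a n)) ^ n) (S n) <= Rmin 1 (alpha_ t (a n)) ^ n).
{ intros n. apply prodf_bounds. intros; apply Hfac. }
assert (Hhalf : forall n, 0 < (1/2)^n) by (intros; apply pow_lt; lra).
assert (Hc : forall n, 0 < c n <= (1/2)^n).
{ intros n. unfold c. destruct (Hprod n) as [[A B] _]. destruct (Ha n). specialize (Hhalf n).
  split. apply Rmult_lt_0_compat; [apply Rmult_lt_0_compat|]; lra.
  assert (a n * prodf (fun t => Rmin 1 (alpha_ t (a n)) ^ n) (S n) <= 1) by nra. nra. }
assert (Hc' : forall n, Rabs (c n) <= (1/2)^n).
{ intros n; rewrite Rabs_pos_eq; apply Hc || (left; apply Hc). }
set (alpha := Ser (Derive_n psi) c a 0).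
assert (Dn : forall j x, Derive_n alpha j x = Ser (Derive_n psi) c a j x).
{ induction j as [|j IH]; intros x; [reflexivity|].
  simpl. rewrite (Derive_ext _ _ x IH). apply is_derive_unique.
  apply series_deriv; [apply psi_D|apply psi_bnd|exact Hc']. }
assert (Hterm : forall x n, 0 <= c n * psi (x - a n) <= (1/2)^n).
{ intros x n. pose proof (psi_01 (x - a n)). pose proof (Hc n). split; nra. }
assert (Hex : forall x, ex_series (fun n => c n * psi (x - a n))).
{ intros x. apply (ex_dom _ 1). intros n. rewrite Rmult_1_l, Rabs_pos_eq; apply Hterm. }
assert (Hnn : forall x, 0 <= alpha x).
{ intros x. unfold alpha, Ser. simpl. rewrite <- Series_zero. apply Series_le; [|apply Hex].
  intros n; split; [lra|apply Hterm]. }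
exists alpha. split; [|split; [exact Hnn|split]].
- intros n x. destruct n as [|j]; [exact I|]. simpl.
  apply (ex_derive_ext (Ser (Derive_n psi) c a j)). intros; symmetry; apply Dn.
  eexists. apply series_deriv; [apply psi_D|apply psi_bnd|exact Hc'].
- intros x; split; intros H.
  + destruct (Rle_dec x 0) as [|Hx]; [assumption|exfalso].
    apply Rnot_le_lt in Hx.
    destruct (archimed_cor1 x Hx) as [N [HN HN0]].
    assert (HaN : a N < x).
    { unfold a. apply Rle_lt_trans with (/ INR N); [|exact HN].
      apply Rinv_le_contravar. apply lt_0_INR; exact HN0. lra. }
    unfold alpha, Ser in H. simpl in H.
    rewrite (Series_incr_n _ (S N)) in H by (lia || apply Hex). simpl pred in H.
    assert (T1 : 0 < sum_f_R0 (fun n => c n * psi (x - a n)) N).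
    { assert (0 < c N * psi (x - a N)) by (apply Rmult_lt_0_compat; [apply Hc|apply psi_pos; lra]).
      destruct N as [|N]; simpl; [lra|].
      pose proof (cond_pos_sum (fun n => c n * psi (x - a n)) N (fun n => proj1 (Hterm x n))). lra. }
    assert (T2 : 0 <= Series (fun k => c (S N + k)%nat * psi (x - a (S N + k)%nat))).
    { rewrite <- Series_zero. apply Series_le.
      intros n; split; [lra|apply Hterm]. apply (ex_dom _ 1). intros n. rewrite Rmult_1_l, Rabs_pos_eq by apply Hterm.
      apply Rle_trans with ((1/2)^(S N + n)). apply Hterm. apply pow_anti; [lra|lia]. }
    lra.
  + unfold alpha, Ser. simpl. rewrite <- Series_zero. apply Series_ext. intros n.
    rewrite psi_nonpos. ring. pose proof (Ha n); lra.
- intros t k. apply filterlim_locally. intros eps.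
  set (m := (t + k)%nat).
  assert (Hd : 0 < Rmin (a m) (eps / 3)).
  { apply Rmin_glb_lt. apply Ha. pose proof (cond_pos eps); lra. }
  exists (mkposreal _ Hd). intros x Hxd Hx0.
  change (Rabs (x - 0) < Rmin (a m) (eps / 3)) in Hxd.
  change (Rabs (alpha x / alpha_ t x ^ k - 0) < eps).
  rewrite Rminus_0_r in *. rewrite Rabs_pos_eq in Hxd by lra.
  assert (Hxm : x < a m) by (pose proof (Rmin_l (a m) (eps/3)); lra).
  assert (Hxe : x < eps / 3) by (pose proof (Rmin_r (a m) (eps/3)); lra).
  set (A := alpha_ t x ^ k).
  assert (HA : 0 < A) by (apply pow_lt, Hpos; lra).
  assert (Bnd : alpha x <= 2 * (x * A)).
  { unfold alpha, Ser; simpl.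
    apply Rle_trans with (Series (fun n => (x * A) * (1/2)^n)).
    - apply Series_le.
      + intros n. split; [apply Hterm|].
        destruct (Rle_dec (x - a n) 0) as [Hle|Hgt].
        * rewrite psi_nonpos by exact Hle. rewrite Rmult_0_r. pose proof (Hhalf n). apply Rmult_le_pos; [apply Rmult_le_pos|]; lra.
        * apply Rnot_le_lt in Hgt.
          assert (Hnm : (m < n)%nat).
          { destruct (Compare_dec.le_lt_dec n m) as [Hle|Hlt]; [|exact Hlt]. exfalso.
            pose proof (Hamono n m Hle). lra. }
          pose proof (psi_pos _ Hgt).
          apply Rle_trans with (c n). pose proof (Hc n). nra.
          unfold c. destruct (Hprod n) as [[P0 P1] P2].
          specialize (P2 t ltac:(unfold m in Hnm; lia)).
          assert (Q : Rmin 1 (alpha_ t (a n)) ^ n <= A).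
          { apply Rle_trans with (Rmin 1 (alpha_ t (a n)) ^ k).
            apply pow_anti. split; [left; apply Rmin_glb_lt; [lra|apply Hpos, Ha]|apply Rmin_l].
            unfold m in Hnm; lia.
            unfold A. apply pow_incr. split. left; apply Rmin_glb_lt; [lra|apply Hpos, Ha].
            apply Rle_trans with (alpha_ t (a n)). apply Rmin_r.
            apply Hmono. left; apply Ha. lra. }
          pose proof (Hhalf n). destruct (Ha n).
          assert (a n * prodf (fun t0 : nat => Rmin 1 (alpha_ t0 (a n)) ^ n) (S n) <= x * A).
          { apply Rmult_le_compat; lra. }
          nra.
      + apply (ex_series_scal_l _ (fun n => (1/2)^n)). apply ex_series_geom, geom_half.
    - rewrite Series_scal_l, Series_geom by apply geom_half. right; field. }
  rewrite Rabs_pos_eq.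
  + apply Rmult_lt_reg_r with A; [exact HA|]. unfold Rdiv. rewrite Rmult_assoc, Rinv_l, Rmult_1_r by lra.
    pose proof (cond_pos eps). nra.
  + apply Rmult_le_pos. apply Hnn. left; apply Rinv_0_lt_compat, HA.
Qed.
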